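(* Let $a=\sum_{t=0}^7a_te_t\in C\ell_{1,2}$ and let $\mathbf{i}=\sqrt{-1}\in\mathbb{C}$. The (complex) eigenvalues of $L(a)$ are $$\lambda_{1,2}=a_0+a_7\mathbf{i}\pm\sqrt{(a_0+a_7\mathbf{i})^2-N(a)-2T(a)\mathbf{i}},\qquad \lambda_{3,4}=a_0-a_7\mathbf{i}\pm\sqrt{(a_0-a_7\mathbf{i})^2-N(a)+2T(a)\mathbf{i}},$$ and each eigenvalue occurs with algebraic multiplicity $2$.
   Context: $C\ell_{1,2}$ is the real Clifford algebra generated by $i_1,i_2,i_3$ with $i_1^2=1$, $i_2^2=i_3^2=-1$ and $i_ti_m=-i_mi_t$ for $t\neq m$, with real basis $e_0=1$, $e_1=i_1$, $e_2=i_2$, $e_3=i_1i_2$, $e_4=i_3$, $e_5=i_1i_3$, $e_6=i_2i_3$, $e_7=i_1i_2i_3$. For $x=\sum_{t=0}^7x_te_t$ write $\overrightarrow{x}=(x_0,\dots,x_7)^T\in\mathbb{R}^8$. For $a\in C\ell_{1,2}$, $L(a)$ is the real $8\times8$ matrix with $\overrightarrow{ax}=L(a)\overrightarrow{x}$ for all $x$. For $a=\sum a_te_t$: $N(a)=a_0^2-a_1^2+a_2^2-a_3^2+a_4^2-a_5^2+a_6^2-a_7^2$ and $T(a)=a_0a_7+a_2a_5-a_1a_6-a_3a_4$. *)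

(* Defs.v *)
From HB Require Import structures.
From mathcomp Require Import all_boot all_order all_algebra.
From mathcomp Require Import complex.
Set Implicit Arguments. Unset Strict Implicit. Unset Printing Implicit Defensive.
Import Order.TTheory GRing.Theory Num.Theory.
Local Open Scope ring_scope.

(* Basis of Cl_{1,2}: e_t, t in 'I_8, is the blade whose generators are the
   binary digits of t: bit 0 <-> i1, bit 1 <-> i2, bit 2 <-> i3.
   e0=1, e1=i1, e2=i2, e3=i1i2, e4=i3, e5=i1i3, e6=i2i3, e7=i1i2i3. *)
Definition cl_bit (t k : nat) : bool := odd (t %/ 2 ^ k).

Definition cl_gen_sq {R : ringType} (k : nat) : R := if k == 0%N then 1 else -1.

(* index of the blade e_s e_t (symmetric difference of generator sets) *)
Definition cl_idx (s t : nat) : nat :=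
  \sum_(k < 3) (cl_bit s k != cl_bit t k) * 2 ^ k.

(* sign in e_s e_t = cl_sign s t * e_(cl_idx s t):
   (-1)^(number of anticommuting swaps) times the squares of common generators *)
Definition cl_sign {R : ringType} (s t : nat) : R :=
  (-1) ^+ (\sum_(j < 3) \sum_(k < 3) ((k < j)%N && cl_bit s j && cl_bit t k))
  * \prod_(k < 3 | cl_bit s k && cl_bit t k) cl_gen_sq k.

Definition cl_mul {R : ringType} (a x : 'cV[R]_8) : 'cV[R]_8 :=
  \col_(i < 8) \sum_(s < 8) \sum_(t < 8)
     (if cl_idx s t == i then cl_sign s t * a s 0 * x t 0 else 0).

Definition Lmx {R : ringType} (a : 'cV[R]_8) : 'M[R]_8 :=
  \matrix_(i < 8, j < 8) cl_mul a (delta_mx j 0) i 0.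

Definition cl_coord {R : ringType} (a : 'cV[R]_8) (t : nat) : R :=
  a (inord t) 0.

Definition cl_N {R : ringType} (a : 'cV[R]_8) : R :=
  let c := cl_coord a in
  c 0%N ^+ 2 - c 1%N ^+ 2 + c 2%N ^+ 2 - c 3%N ^+ 2
  + c 4%N ^+ 2 - c 5%N ^+ 2 + c 6%N ^+ 2 - c 7%N ^+ 2.

Definition cl_T {R : ringType} (a : 'cV[R]_8) : R :=
  let c := cl_coord a in
  c 0%N * c 7%N + c 2%N * c 5%N - c 1%N * c 6%N - c 3%N * c 4%N.

(* Main.v *)
Require Import Defs.
From HB Require Import structures.
From mathcomp Require Import all_boot all_order all_algebra.
From mathcomp Require Import complex.
From mathcomp Require Import ring perm.
Import Order.TTheory GRing.Theory Num.Theory.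
Local Open Scope ring_scope.

Definition xr (s t : nat) : nat :=
  ((cl_bit s 0 != cl_bit t 0) * 2 ^ 0 + (cl_bit s 1 != cl_bit t 1) * 2 ^ 1
   + (cl_bit s 2 != cl_bit t 2) * 2 ^ 2)%N.
Definition sg (s t : nat) : nat :=
  ((cl_bit s 1 && cl_bit t 0) + (cl_bit s 2 && cl_bit t 0) + (cl_bit s 2 && cl_bit t 1)
   + (cl_bit s 1 && cl_bit t 1) + (cl_bit s 2 && cl_bit t 2))%N.

Lemma cl_idxE s t : cl_idx s t = xr s t.
Proof. by rewrite /cl_idx !big_ord_recr big_ord0 /=. Qed.

Lemma cl_signE (K : comRingType) s t : cl_sign s t = (-1) ^+ sg s t :> K.
Proof.
rewrite /cl_sign [X in _ * X]big_mkcond !big_ord_recr !big_ord0 /= /sg /cl_gen_sq /=.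
case: (cl_bit s 0); case: (cl_bit s 1); case: (cl_bit s 2);
case: (cl_bit t 0); case: (cl_bit t 1); case: (cl_bit t 2); rewrite /=; ring.
Qed.

Lemma xr_lt (i k : 'I_8) : (xr i k < 8)%N.
Proof. by case: i => [[|[|[|[|[|[|[|[|//]]]]]]]] ?]; case: k => [[|[|[|[|[|[|[|[|//]]]]]]]] ?]. Qed.

Lemma xr_check : all (fun s => all (fun k => all (fun i =>
   (xr s k == i) == (s == xr i k)) (iota 0 8)) (iota 0 8)) (iota 0 8).
Proof. by vm_compute. Qed.

Lemma xr_eq (s k i : 'I_8) : (xr s k == i) = (s == xr i k :> nat).
Proof.
have /allP/(_ s) := xr_check; rewrite mem_iota ltn_ord => /(_ isT).
move/allP/(_ k); rewrite mem_iota ltn_ord => /(_ isT).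
by move/allP/(_ i); rewrite mem_iota ltn_ord => /(_ isT) /eqP.
Qed.

Lemma Lmx_entry (K : comRingType) (c : 'cV[K]_8) (i k : 'I_8) :
  Lmx c i k = (-1) ^+ sg (xr i k) k * cl_coord c (xr i k).
Proof.
rewrite /Lmx mxE /cl_mul mxE.
rewrite (bigD1 (Ordinal (xr_lt i k))) //= [X in _ + X]big1 ?addr0; last first.
  move=> s hs; apply: big1 => t _; rewrite cl_idxE.
  have [->|ht] := eqVneq t k.
    rewrite xr_eq; case: eqP => // hs'; case/eqP: hs; exact: val_inj.
  by rewrite mxE (negbTE ht) /= mulr0; case: ifP.
rewrite (bigD1 k) //= [X in _ + X]big1 ?addr0; last first.
  by move=> t ht; rewrite mxE (negbTE ht) /= mulr0; case: ifP.
have := xr_eq (Ordinal (xr_lt i k)) k i; rewrite eqxx /= cl_idxE => ->.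
rewrite mxE !eqxx mulr1 cl_signE /cl_coord.
congr (_ * c _ 0); apply: val_inj; rewrite /= inordK //; exact: xr_lt.
Qed.


Lemma det_exp0 (K : comRingType) n (A : 'M[K]_n.+1) :
  \det A = \sum_(k < n.+1) A ord0 k * ((-1) ^+ k *
     \det (\matrix_(i < n, l < n) A (lift ord0 i) (lift k l))).
Proof.
rewrite (expand_det_row _ ord0); apply: eq_bigr => k _; rewrite /cofactor add0n.
congr (_ * (_ * \det _)); apply/matrixP => i l; by rewrite !mxE.
Qed.


Lemma det4 (K : comRingType) (f : nat -> nat -> K) :
  \det (\matrix_(i < 4, k < 4) f i k) =
  f 0%N 0%N * f 1%N 1%N * f 2%N 2%N * f 3%N 3%N - f 0%N 0%N * f 1%N 1%N * f 2%N 3%N * f 3%N 2%N - f 0%N 0%N * f 1%N 2%N * f 2%N 1%N * f 3%N 3%N + f 0%N 0%N * f 1%N 2%N * f 2%N 3%N * f 3%N 1%N + f 0%N 0%N * f 1%N 3%N * f 2%N 1%N * f 3%N 2%N - f 0%N 0%N * f 1%N 3%N * f 2%N 2%N * f 3%N 1%N - f 0%N 1%N * f 1%N 0%N * f 2%N 2%N * f 3%N 3%N + f 0%N 1%N * f 1%N 0%N * f 2%N 3%N * f 3%N 2%N + f 0%N 1%N * f 1%N 2%N * f 2%N 0%N * f 3%N 3%N - f 0%N 1%N * f 1%N 2%N * f 2%N 3%N * f 3%N 0%N - f 0%N 1%N * f 1%N 3%N * f 2%N 0%N * f 3%N 2%N + f 0%N 1%N * f 1%N 3%N * f 2%N 2%N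 * f 3%N 0%N + f 0%N 2%N * f 1%N 0%N * f 2%N 1%N * f 3%N 3%N - f 0%N 2%N * f 1%N 0%N * f 2%N 3%N * f 3%N 1%N - f 0%N 2%N * f 1%N 1%N * f 2%N 0%N * f 3%N 3%N + f 0%N 2%N * f 1%N 1%N * f 2%N 3%N * f 3%N 0%N + f 0%N 2%N * f 1%N 3%N * f 2%N 0%N * f 3%N 1%N - f 0%N 2%N * f 1%N 3%N * f 2%N 1%N * f 3%N 0%N - f 0%N 3%N * f 1%N 0%N * f 2%N 1%N * f 3%N 2%N + f 0%N 3%N * f 1%N 0%N * f 2%N 2%N * f 3%N 1%N + f 0%N 3%N * f 1%N 1%N * f 2%N 0%N * f 3%N 2%N - f 0%N 3%N * f 1%N 1%N * f 2%N 2%N * f 3%N 0%N - f 0%N 3%N * f 1%N 2%N * f 2%N 0%N * f 3%N 1%N + f 0%N 3%N * f 1%N 2%N * f 2%N 1%N * f 3%N 0%N.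
Proof.
rewrite det_exp0 !big_ord_recr big_ord0 /=.
rewrite !det_exp0 !big_ord_recr !big_ord0 /=.
rewrite !det_exp0 !big_ord_recr !big_ord0 /=.
rewrite !det_exp0 !big_ord_recr !big_ord0 /=.
rewrite !det_mx00 !mxE /=.
ring.
Qed.


Arguments cl_coord : simpl never.

Definition sgm (i : nat) : nat := nth 0%N [:: 0; 3; 5; 6; 7; 4; 2; 1]%N i.
Lemma sgm_lt (i : 'I_8) : (sgm i < 8)%N.
Proof. by case: i => [[|[|[|[|[|[|[|[|//]]]]]]]] ?]. Qed.
Definition sgf (i : 'I_8) : 'I_8 := Ordinal (sgm_lt i).
Lemma sgf_inj : injective sgf.
Proof.
move=> x y /(congr1 val) /= h; apply: val_inj; move: h.
by case: x => [[|[|[|[|[|[|[|[|//]]]]]]]] ?]; case: y => [[|[|[|[|[|[|[|[|//]]]]]]]] ?].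
Qed.
Definition sp : 'S_8 := perm sgf_inj.

Definition eps {K : comRingType} (i : nat) : K := if (6 <= i)%N then -1 else 1.
Definition epsv {K : comRingType} : 'rV[K]_8 := \row_(i < 8) eps i.
Definition Lent {K : comRingType} (c : 'cV[K]_8) (i k : nat) : K :=
  (-1) ^+ sg (xr i k) k * cl_coord c (xr i k).
Definition Gf {K : comRingType} (c : 'cV[K]_8) (i k : nat) : K :=
  eps i * eps k * Lent c (sgm i) (sgm k).

Section Main.
Variable K : comRingType.
Variable c : 'cV[K]_8.

Definition M2 := diag_mx epsv *m row_perm sp (col_perm sp (Lmx c)) *m diag_mx epsv.

Lemma M2gen (A : 'M[K]_8) (i k : 'I_8) :
  (diag_mx epsv *m row_perm sp (col_perm sp A) *m diag_mx epsv) i k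
  = eps i * A (sp i) (sp k) * eps k.
Proof. by rewrite mul_mx_diag mul_diag_mx !mxE. Qed.

Lemma M2E (i k : 'I_8) : M2 i k = Gf c i k.
Proof.
rewrite /M2 M2gen Lmx_entry !permE /Gf /Lent /=.
ring.
Qed.

Lemma detM2 : \det M2 = \det (Lmx c).
Proof.
rewrite /M2 !det_mulmx det_diag row_permE col_permE !det_mulmx !det_perm odd_permV.
rewrite !big_ord_recr big_ord0 /= !mxE /eps /=.
case: (odd_perm sp); rewrite /=; ring.
Qed.

Definition PP := \matrix_(i < 4, k < 4) Gf c i k.
Definition QQ := \matrix_(i < 4, k < 4) Gf c (4 + i) k.

Lemma M2_block : M2 = block_mx PP (- QQ) QQ PP.
Proof.
apply/(@matrixP _ (4 + 4) (4 + 4)) => i k; rewrite M2E.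
case: (split_ordP i) => i' ->; case: (split_ordP k) => k' ->;
rewrite ?block_mxEul ?block_mxEur ?block_mxEdl ?block_mxEdr !mxE /=;
case: i' => [[|[|[|[|//]]]] ?]; case: k' => [[|[|[|[|//]]]] ?];
rewrite /Gf /Lent /eps /=; ring.
Qed.

End Main.


Lemma block_det (K : comRingType) (j : K) (hj : j ^+ 2 = -1) (P Q : 'M[K]_4) :
  \det (block_mx P (- Q) Q P) = \det (P - j *: Q) * \det (P + j *: Q).
Proof.
pose U : 'M[K]_(4 + 4) := block_mx 1%:M 0 (j%:M) 1%:M.
pose V : 'M[K]_(4 + 4) := block_mx 1%:M 0 ((- j)%:M) 1%:M.
have e : V *m (block_mx P (- Q) Q P *m U) = block_mx (P - j *: Q) (- Q) 0 (P + j *: Q).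
  rewrite /U /V !mulmx_block !mulmx1 !mulmx0 !mul1mx !mul0mx !addr0 !add0r.
  rewrite !mul_mx_scalar !mul_scalar_mx.
  congr block_mx; apply/matrixP => a b; rewrite !mxE.
  - ring.
  - transitivity ((j ^+ 2 + 1) * Q a b); first ring.
    by rewrite hj addNr mul0r.
  - ring.
have dU : \det U = 1 by rewrite /U det_lblock !det1 mulr1.
have dV : \det V = 1 by rewrite /V det_lblock !det1 mulr1.
have := congr1 determinant e.
by rewrite !det_mulmx dU dV mul1r mulr1 det_ublock.
Qed.

Definition nw {K : comRingType} (c : 'cV[K]_8) (j : K) : K :=
  let x := cl_coord c in
  (x 0%N + j * x 7%N) ^+ 2 - (x 3%N + j * x 4%N) ^+ 2
  - (x 5%N - j * x 2%N) ^+ 2 + (x 6%N - j * x 1%N) ^+ 2.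

Lemma detPQ (K : comRingType) (c : 'cV[K]_8) (j : K) :
  \det (@PP K c + j *: @QQ K c) = nw c j ^+ 2.
Proof.
have -> : @PP K c + j *: @QQ K c =
   \matrix_(i < 4, k < 4) (fun a b => Gf c a b + j * Gf c (4 + a) b) i k.
  by apply/matrixP => a b; rewrite !mxE.
rewrite (@det4 K (fun a b => Gf c a b + j * Gf c (4 + a) b)) /Gf /Lent /eps /nw /=.
ring.
Qed.

Lemma detL (K : comRingType) (j : K) (hj : j ^+ 2 = -1) (c : 'cV[K]_8) :
  \det (Lmx c) = (cl_N c ^+ 2 + 4%:R * cl_T c ^+ 2) ^+ 2.
Proof.
rewrite -detM2 M2_block (@block_det K j hj) -scaleNr !detPQ.
have e1 : forall jj : K, nw c jj = cl_N c + 2%:R * jj * cl_T c + (jj ^+ 2 + 1) *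
   (cl_coord c 1 ^+ 2 - cl_coord c 2 ^+ 2 - cl_coord c 4 ^+ 2 + cl_coord c 7 ^+ 2).
  by move=> jj; rewrite /nw /cl_N /cl_T /=; ring.
rewrite !e1 sqrrN hj addNr !mul0r !addr0.
transitivity ((cl_N c ^+ 2 - j ^+ 2 * 4%:R * cl_T c ^+ 2) ^+ 2); first ring.
by rewrite hj; ring.
Qed.


Local Open Scope complex_scope.

Lemma diag_check : all (fun i => all (fun k =>
   ((xr i k == 0) == (i == k)) && ((i == k) ==> (sg (xr i k) k == 0)))
   (iota 0 8)) (iota 0 8).
Proof. by vm_compute. Qed.

Lemma diag_eq (i k : 'I_8) :
  ((xr i k == 0) = (i == k)) /\ ((i == k) -> sg (xr i k) k = 0%N).
Proof.
have /allP/(_ i) := diag_check; rewrite mem_iota ltn_ord => /(_ isT).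
move/allP/(_ k); rewrite mem_iota ltn_ord => /(_ isT) /andP [/eqP -> /implyP h].
by split => // /h /eqP.
Qed.

Lemma cpmxE (R : rcfType) (A : 'M[R]_8) (i k : 'I_8) :
  char_poly_mx (map_mx (fun x : R => x%:C) A) i k =
  'X *+ (i == k) - ((A i k)%:C)%:P.
Proof. by rewrite /char_poly_mx !mxE. Qed.

Definition cX {R : rcfType} (a : 'cV[R]_8) : 'cV[{poly R[i]}]_8 :=
  \col_(k < 8) (((k : nat) == 0)%N%:R * 'X - ((a k 0)%:C)%:P).

Lemma cXE (R : rcfType) (a : 'cV[R]_8) (n : nat) : (n < 8)%N ->
  cl_coord (cX a) n = (n == 0)%N%:R * 'X - ((cl_coord a n)%:C)%:P.
Proof. move=> hn; by rewrite /cl_coord /cX mxE inordK. Qed.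

Lemma char_eq (R : rcfType) (a : 'cV[R]_8) :
  char_poly_mx (map_mx (fun x : R => x%:C) (Lmx a)) = Lmx (cX a).
Proof.
apply/matrixP => i k; rewrite cpmxE !Lmx_entry cXE ?xr_lt //.
have [e1 e2] := diag_eq i k; rewrite e1.
have [hik|hik] := eqVneq i k.
  rewrite -hik in e2 *; rewrite (e2 (eqxx _)) /=.
  rewrite !rmorphM !rmorphXn !rmorphN1; ring.
rewrite /= !rmorphM !rmorphXn !rmorphN1; ring.
Qed.

Theorem proposition2p5 (R : rcfType) (a : 'cV[R]_8) :
  let a0 : R[i] := (cl_coord a 0%N)%:C in
  let a7 : R[i] := (cl_coord a 7%N)%:C in
  let N : R[i] := (cl_N a)%:C in
  let T : R[i] := (cl_T a)%:C in
  let b1 := a0 + a7 * 'i in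
  let b2 := a0 - a7 * 'i in
  let r1 := sqrtc (b1 ^+ 2 - N - 2%:R * T * 'i) in
  let r2 := sqrtc (b2 ^+ 2 - N + 2%:R * T * 'i) in
  let l1 := b1 + r1 in
  let l2 := b1 - r1 in
  let l3 := b2 + r2 in
  let l4 := b2 - r2 in
  char_poly (map_mx (fun x : R => x%:C) (Lmx a)) =
    (('X - l1%:P) * ('X - l2%:P) * ('X - l3%:P) * ('X - l4%:P)) ^+ 2.
Proof.
move=> a0 a7 N T b1 b2 r1 r2 l1 l2 l3 l4.
have hj : ('i%:P : {poly R[i]}) ^+ 2 = -1 by rewrite -rmorphXn sqr_i rmorphN1.
rewrite /char_poly char_eq (@detL _ _ hj).
have s1 : r1 ^+ 2 = b1 ^+ 2 - N - 2%:R * T * 'i := sqr_sqrtc _.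
have s2 : r2 ^+ 2 = b2 ^+ 2 - N + 2%:R * T * 'i := sqr_sqrtc _.
have eR : ('X - l1%:P) * ('X - l2%:P) * ('X - l3%:P) * ('X - l4%:P) =
   (('X - b1%:P) ^+ 2 - (r1 ^+ 2)%:P) * (('X - b2%:P) ^+ 2 - (r2 ^+ 2)%:P).
  rewrite /l1 /l2 /l3 /l4 ?rmorphD ?rmorphB ?rmorphN ?rmorphM ?rmorphXn; ring.
rewrite eR s1 s2.
pose x n : {poly R[i]} := ((cl_coord a n)%:C)%:P.
pose A : {poly R[i]} := 'X ^+ 2 - 2%:R * x 0%N * 'X + N%:P.
pose B : {poly R[i]} := 2%:R * T%:P - 2%:R * x 7%N * 'X.
have e1 : (('X - b1%:P) ^+ 2 - (b1 ^+ 2 - N - 2%:R * T * 'i)%:P) *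
   (('X - b2%:P) ^+ 2 - (b2 ^+ 2 - N + 2%:R * T * 'i)%:P) =
   A ^+ 2 - ('i%:P) ^+ 2 * B ^+ 2.
  rewrite /A /B /x /b1 /b2 /a0 /a7; ring.
rewrite e1 hj.
rewrite /cl_N /cl_T /= !cXE // /A /B /x /N /T /cl_N /cl_T /=.
ring.
Qed.
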